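(* For any parameter $\theta$ of the model $f(\cdot;\theta)$ (indeed for any classifier $f:\mathbb R^{M\times d}\to\mathbb R$), if $\tau\ge\|\boldsymbol\mu\|_2$ then the robust test error satisfies $L_D^{\mathrm{rob}}(\theta)\ge 1/4$.
   Context: Data distribution $D$: fix $\boldsymbol\mu_+,\boldsymbol\mu_-\in\mathbb R^d$ with $\|\boldsymbol\mu_+\|_2=\|\boldsymbol\mu_-\|_2=:\|\boldsymbol\mu\|_2$ and $\langle\boldsymbol\mu_+,\boldsymbol\mu_-\rangle=0$. A sample is $(\mathbf X,y)$ with $\mathbf X=(\mathbf x_1,\dots,\mathbf x_M)^\top\in\mathbb R^{M\times d}$, $y\in\{\pm1\}$ uniform; $\mathbf x_1=\boldsymbol\mu_+$ if $y=1$ and $\mathbf x_1=\boldsymbol\mu_-$ if $y=-1$; $\mathbf x_2,\dots,\mathbf x_M$ are i.i.d. noise vectors $\boldsymbol\xi_i\sim\mathcal N\big(0,\sigma_p^2(\mathbf I-\boldsymbol\mu_+\boldsymbol\mu_+^\top\|\boldsymbol\mu\|_2^{-2}-\boldsymbol\mu_-\boldsymbol\mu_-^\top\|\boldsymbol\mu\|_2^{-2})\big)$. Perturbation set $B(\mathbf X,\tau)=\{\widetilde{\mathbf X}=(\widetilde{\mathbf x}_1,\dots,\widetilde{\mathbf x}_M)^\top:\|\widetilde{\mathbf x}_m-\mathbf x_m\|_2\le\tau\ \forall m\}$. Robust test error $L_D^{\mathrm{rob}}(\theta)=\mathbb E_{(\mathbf X,y)\sim D}\max_{\widetilde{\mathbf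 X}\in B(\mathbf X,\tau)}\mathbb 1(yf(\widetilde{\mathbf X},\theta)\le0)$. *)

(* Defs.v *)
From HB Require Import structures.
From mathcomp Require Import all_boot all_order all_algebra.
From mathcomp Require Import all_classical all_reals all_analysis.

Set Implicit Arguments.
Unset Strict Implicit.
Unset Printing Implicit Defensive.

Import Order.TTheory GRing.Theory Num.Theory.

Local Open Scope classical_set_scope.
Local Open Scope ring_scope.

Section defs.
Context {R : realType}.

Definition dotv {d : nat} (u v : 'rV[R]_d) : R := \sum_(j < d) u 0 j * v 0 j.
Definition enorm {d : nat} (v : 'rV[R]_d) : R := Num.sqrt (dotv v v).

Definition in_ball {m d : nat} (tau : R) (X Xt : 'M[R]_(m, d)) : Prop :=
  forall i : 'I_m, enorm (row i Xt - row i X) <= tau.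

Definition lab (b : bool) : R := if b then 1 else -1.

(** The robust 0-1 loss max_{Xt in B(X,tau)} 1(y f(Xt) <= 0) equals 1 exactly
    when this proposition holds. *)
Definition rob_err {m d : nat} (f : 'M[R]_(m, d) -> R) (tau : R)
  (X : 'M[R]_(m, d)) (b : bool) : Prop :=
  exists Xt, in_ball tau X Xt /\ lab b * f Xt <= 0.

(** Borel sigma-algebra on R^{m x d} (generated by the coordinate maps). *)
Definition mx_measurable {m d : nat} (A : set 'M[R]_(m, d)) : Prop :=
  <<s \bigcup_(ij in [set: 'I_m * 'I_d])
        preimage_set_system setT (fun X : 'M[R]_(m, d) => X ij.1 ij.2)
          (@measurable _ R) >> A.

(** Centered 1-d Gaussian law with variance s2 (s2 >= 0);
    variance 0 gives the Dirac mass at 0. *)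
Definition gauss_law (s2 : R) (B : set R) : \bar R :=
  if s2 == 0 then (\1_B 0)%:E else normal_prob 0 (Num.sqrt s2) B.

(** The quadratic form v^T Sigma v of
    Sigma = sp^2 (I - mup mup^T/|mu|^2 - mum mum^T/|mu|^2). *)
Definition noise_var {d : nat} (sp : R) (mup mum v : 'rV[R]_d) : R :=
  sp ^+ 2 * (dotv v v - (dotv v mup) ^+ 2 / (enorm mup) ^+ 2
                      - (dotv v mum) ^+ 2 / (enorm mum) ^+ 2).

(** A random vector xi : Omega -> R^d is N(0, Sigma) (Cramer-Wold definition):
    its coordinates are measurable and every linear functional <v, xi> has law
    N(0, v^T Sigma v). *)
Definition is_noise_vector {d0 : measure_display} {Omega : measurableType d0}
  (P : probability Omega R) {d : nat} (sp : R) (mup mum : 'rV[R]_d)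
  (xi : Omega -> 'rV[R]_d) : Prop :=
  (forall j : 'I_d, measurable_fun setT (fun w => xi w 0 j)) /\
  forall (v : 'rV[R]_d) (B : set R), measurable B ->
    P [set w | dotv v (xi w) \in B] = gauss_law (noise_var sp mup mum v) B.

Definition sigma_vec {d0 : measure_display} {Omega : measurableType d0}
  {d : nat} (xi : Omega -> 'rV[R]_d) : set (set Omega) :=
  <<s \bigcup_(j in [set: 'I_d])
        preimage_set_system setT (fun w => xi w 0 j) (@measurable _ R) >>.

Definition sigma_bool {d0 : measure_display} {Omega : measurableType d0}
  (y : Omega -> bool) : set (set Omega) :=
  [set A | exists S : set bool, A = y @^-1` S].

Definition mutually_independent {d0 : measure_display}
  {Omega : measurableType d0} (P : probability Omega R) {I : finType}
  (F : I -> set (set Omega)) : Prop :=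
  forall A : I -> set Omega, (forall i, F i (A i)) ->
    P (\bigcap_(i in [set: I]) A i) = (\prod_(i : I) P (A i))%E.

(** The sample (X, y): first row mu_y, rows 2..M the noise vectors. *)
Definition sample_X {Omega : Type} {K d : nat} (mup mum : 'rV[R]_d)
  (y : Omega -> bool) (xi : 'I_K -> Omega -> 'rV[R]_d) (w : Omega)
  : 'M[R]_(K.+1, d) :=
  \matrix_(i < K.+1, j < d)
    match unlift ord0 i with
    | Some k => xi k w 0 j
    | None => (if y w then mup else mum) 0 j
    end.

End defs.

(* Main.v *)
Require Import Defs.
From HB Require Import structures.
From mathcomp Require Import all_boot all_order all_algebra.
From mathcomp Require Import all_classical all_reals all_analysis.
From mathcomp Require Import ring lra.
Import Order.TTheory GRing.Theory Num.Theory.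
Local Open Scope classical_set_scope.
Local Open Scope ring_scope.

Lemma dotv_ge0 {R : realType} {d} (v : 'rV[R]_d) : 0 <= dotv v v.
Proof. by apply: sumr_ge0 => j _; rewrite -expr2 sqr_ge0. Qed.

Lemma enorm0 {R : realType} {d} : enorm (0 : 'rV[R]_d) = 0.
Proof.
by rewrite /enorm /dotv big1 ?sqrtr0 // => j _; rewrite mxE mul0r.
Qed.

Lemma cover_lemma (R : realType) (K d : nat) (mup mum : 'rV[R]_d) (tau : R)
  (xi : 'I_K -> 'rV[R]_d) (f : 'M[R]_(K.+1, d) -> R) :
  enorm mup = enorm mum -> dotv mup mum = 0 -> enorm mup <= tau ->
  let X b := \matrix_(i < K.+1, j < d)
    match unlift ord0 i with
    | Some k => xi k 0 j
    | None => (if b then mup else mum) 0 j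
    end in
  rob_err f tau (X true) true \/ rob_err f tau (X false) false.
Proof.
move=> Hn Ho Ht X.
pose Z := \matrix_(i < K.+1, j < d)
    match unlift ord0 i with
    | Some k => xi k 0 j
    | None => (2^-1 *: (mup + mum)) 0 j
    end.
have n2 : dotv mup mup = dotv mum mum.
  by rewrite -(sqr_sqrtr (dotv_ge0 mup)) -(sqr_sqrtr (dotv_ge0 mum)) -/(enorm _) -/(enorm _) Hn.
have key : forall b, in_ball tau (X b) Z.
  move=> b i; case: (unliftP ord0 i) => [k ->|->].
    have -> : row (lift ord0 k) Z - row (lift ord0 k) (X b) = 0.
      by apply/matrixP => a j; rewrite !mxE liftK subrr.
    by rewrite enorm0; apply: le_trans Ht; apply: sqrtr_ge0.
  apply: le_trans Ht; rewrite /enorm ler_sqrt ?dotv_ge0 //.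
  have -> : dotv (row ord0 Z - row ord0 (X b)) (row ord0 Z - row ord0 (X b))
      = 4^-1 * (dotv mup mup + dotv mum mum - 2 * dotv mup mum).
    have -> : 4^-1 * (dotv mup mup + dotv mum mum - 2 * dotv mup mum) =
       \sum_(j < d) 4^-1 * (mup 0 j * mup 0 j + mum 0 j * mum 0 j - 2 * (mup 0 j * mum 0 j)).
      by rewrite -mulr_sumr sumrB big_split /= -mulr_sumr.
    rewrite /dotv; apply: eq_bigr => j _.
    rewrite !mxE unlift_none.
    by case: b => /=; rewrite ?mxE; field.
  rewrite Ho n2; have := dotv_ge0 mum; lra.
have [fZ|fZ] := lerP (f Z) 0.
  by left; exists Z; split => //; rewrite /lab mul1r.
by right; exists Z; split => //; rewrite /lab mulN1r oppr_le0 ltW.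
Qed.
Lemma prod_opt (R : realType) (T : finType) (F : option T -> \bar R) :
  (\prod_(i : option T) F i = F None * \prod_(k : T) F (Some k))%E.
Proof.
rewrite (bigD1 None) //=; congr (_ * _)%E.
rewrite (reindex_omap Some id); last by case.
by apply: eq_bigl => j /=; rewrite eqxx.
Qed.
Section prob.
Variables (R : realType) (d0 : measure_display) (Omega : measurableType d0).
Variable (P : probability Omega R).

Lemma PE {A : set Omega} : measurable A -> exists a : R, P A = a%:E.
Proof. by move=> mA; exists (fine (P A)); rewrite fineK // fin_num_measure. Qed.

Lemma indep_gen (G : set (set Omega)) (Y : set Omega) :
  setI_closed G -> (forall A, G A -> measurable A) -> measurable Y ->
  (forall A, G A -> P (Y `&` A) = (P Y * P A)%E) ->
  forall A, <<s G>> A -> P (Y `&` A) = (P Y * P A)%E.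
Proof.
move=> GI Gm mY HG.
pose H := [set A | measurable A /\ P (Y `&` A) = (P Y * P A)%E].
suff sub : <<s G>> `<=` H by move=> A /sub[].
apply: (@lambda_system_subset _ G GI setT H) => //.
- apply/dynkin_lambda_system; split.
  + by split => //; rewrite setIT probability_setT mule1.
  + move=> A [mA eA]; split; first exact: measurableC.
    have mYA : measurable (Y `&` A) by exact: measurableI.
    have mYC : measurable (Y `&` ~` A) by apply: measurableI => //; exact: measurableC.
    have U : P Y = (P (Y `&` A) + P (Y `&` ~` A))%E.
      rewrite -measureU //; last by rewrite setIACA setICr setI0.
      by rewrite -setIUr setUCr setIT.
    rewrite probability_setC //.
    move: U eA; have [y ->] := PE mY; have [a ->] := PE mA.
    have [b ->] := PE mYA; have [c ->] := PE mYC.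
    rewrite -EFinD -EFinB -!EFinM => -[U1] -[eA1].
    congr (_%:E); rewrite mulrBr mulr1 -eA1; lra.
  + move=> F tF HF; split.
      by apply: bigcup_measurable => k _; exact: (HF k).1.
    have [y Hy] := PE mY.
    rewrite setI_bigcupr measure_bigcup //; last first.
      exact: trivIset_setIl.
      by move=> i _; apply: measurableI => //; exact: (HF i).1.
    rewrite measure_bigcup //; last by move=> i _; exact: (HF i).1.
    rewrite Hy -nneseriesZl //; apply: eq_eseriesr => n _.
    have [_ e] := HF n; rewrite -Hy; exact: e.
- by move=> A GA; split; [exact: Gm | exact: HG].
Qed.


Lemma sigmaT (T : Type) (G : set (set T)) : <<s G>> setT.
Proof. have := @sigma_algebraCD T setT G set0 (@sigma_algebra0 T setT G). by rewrite setD0. Qed.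

Lemma sigmaI (T : Type) (G : set (set T)) A B : <<s G>> A -> <<s G>> B -> <<s G>> (A `&` B).
Proof.
have [_ _ _ sI] := (@sigma_algebraP T setT <<s G>> (fun X _ => @subsetT T X)).1
  (smallest_sigma_algebra setT G).
exact: sI.
Qed.

Lemma bigcap_opt (T : Type) (I : finType) (A : option I -> set T) :
  \bigcap_(i in [set: option I]) A i = A None `&` \bigcap_(k in [set: I]) A (Some k).
Proof.
apply/seteqP; split => x.
  by move=> H; split; [exact: H | move=> k _; exact: H].
by move=> [H0 H] [i|] _ //; exact: H.
Qed.

End prob.

Theorem mainTheorem2 (R : realType) (K d : nat) (mup mum : 'rV[R]_d)
  (sp tau : R)
  (d0 : measure_display) (Omega : measurableType d0) (P : probability Omega R)
  (y : Omega -> bool) (xi : 'I_K -> Omega -> 'rV[R]_d)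
  (f : 'M[R]_(K.+1, d) -> R) :
  enorm mup = enorm mum ->
  dotv mup mum = 0 ->
  (* y uniform on {+1,-1} *)
  measurable (y @^-1` [set true]) ->
  P (y @^-1` [set true]) = (2^-1)%:E ->
  (* each noise vector is N(0, sp^2 (I - mup mup^T/|mu|^2 - mum mum^T/|mu|^2)) *)
  (forall k, is_noise_vector P sp mup mum (xi k)) ->
  (* y, xi_2, ..., xi_M are mutually independent *)
  mutually_independent P
    (fun o : option 'I_K =>
       match o with None => sigma_bool y | Some k => sigma_vec (xi k) end) ->
  (* the robust loss is a measurable function of the data (X, y) *)
  (forall b : bool, mx_measurable [set X | rob_err f tau X b]) ->
  enorm mup <= tau ->
  (\int[P]_w (\1_[set w | rob_err f tau (sample_X mup mum y xi w) (y w)] w)%:E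
     >= (4^-1)%:E)%E.
Proof.
move=> Hn Ho mY PY Hnoise Hind Hmx Ht.
have mxi : forall k j, measurable_fun setT (fun w => xi k w 0 j).
  by move=> k j; exact: (Hnoise k).1.
pose Gpi : set (set Omega) := [set A | exists B : 'I_K -> set Omega,
  (forall k, sigma_vec (xi k) (B k)) /\ A = \bigcap_(k in [set: 'I_K]) B k].
have svm : forall k A, sigma_vec (xi k) A -> measurable A.
  move=> k; apply: smallest_sub; first exact: sigma_algebra_measurable.
  by move=> _ [j _ [B mB <-]]; apply: (mxi k j measurableT).

have Gm : forall A, Gpi A -> measurable A.
  move=> _ [B [HB ->]]; apply: fin_bigcap_measurable; first exact: finite_finset.
  by move=> k _; exact: svm (HB k).
have GI : setI_closed Gpi.
  move=> _ _ [B [HB ->]] [C [HC ->]]; exists (fun k => B k `&` C k); split.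
    by move=> k; exact: (@sigmaI _ _ _ _ (HB k) (HC k)).
  apply/seteqP; split => w.
    by move=> [H1 H2] k Hk; split; [exact: H1|exact: H2].
  by move=> H; split => k Hk; have [] := H k Hk.
have sGm : forall A, <<s Gpi>> A -> measurable A.
  by apply: smallest_sub; [exact: sigma_algebra_measurable | exact: Gm].
have indY : forall S : set bool, measurable (y @^-1` S) ->
    forall A, <<s Gpi>> A -> P (y @^-1` S `&` A) = (P (y @^-1` S) * P A)%E.
  move=> S mS; apply: indep_gen => //.
  move=> _ [B [HB ->]].
  have H1 := Hind (fun o => match o with None => y @^-1` S | Some k => B k end).
  have H2 := Hind (fun o => match o with None => setT | Some k => B k end).
  rewrite bigcap_opt prod_opt /= in H1; rewrite bigcap_opt prod_opt /= in H2.
  rewrite setTI probability_setT mul1e in H2.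
  rewrite H1; last by case => [k|] //=; exists S.
  rewrite H2 //; by case => [k|] //=; exists setT; rewrite preimage_setT.
pose Xs (b : bool) (w : Omega) := sample_X mup mum (fun _ => b) xi w.
pose Ab (b : bool) := [set w | rob_err f tau (Xs b w) b].
have preim : forall b S, mx_measurable S -> <<s Gpi>> (Xs b @^-1` S).
  move=> b S HS.
  suff : image_set_system setT (Xs b) <<s Gpi>> S by rewrite /image_set_system /= setTI.
  move: S HS; rewrite /mx_measurable; apply: smallest_sub.
    exact: sigma_algebra_image.
  move=> _ [[i j] _ [B mB <-]]; rewrite /image_set_system /=.
  case: (unliftP ord0 i) => [k ->|->] /=.
    apply: sub_sigma_algebra.
    exists (fun k' => if k' == k then setT `&` (fun w => xi k w 0 j) @^-1` B else setT).
    split.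
      move=> k'; case: eqP => [->|_]; last exact: sigmaT.
      by apply: sub_sigma_algebra; exists j => //; exists B.
    apply/seteqP; split => w.
      move=> [_ [_ Hw]] k' _; case: eqP => // _.
      by split => //; rewrite /Xs /sample_X /= mxE liftK in Hw.
    move=> H; split => //; split => //.
    have := H k I; rewrite eqxx => -[_ Hw].
    by rewrite /Xs /sample_X /= mxE liftK.
  have [cB|cB] := pselect (B ((if b then mup else mum) 0 j)).
    suff -> : setT `&` Xs b @^-1` (setT `&` (fun X => X ord0 j) @^-1` B) = setT.
      exact: sigmaT.
    apply/seteqP; split => w // _; split => //; split => //.
    by rewrite /Xs /sample_X /= mxE unlift_none.
  suff -> : setT `&` Xs b @^-1` (setT `&` (fun X => X ord0 j) @^-1` B) = set0.
    exact: sigma_algebra0.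
  apply/seteqP; split => w // [_ [_ Hw]]; apply: cB.
  by rewrite /Xs /sample_X /= mxE unlift_none in Hw.
have sAb : forall b, <<s Gpi>> (Ab b) by move=> b; exact: (preim b _ (Hmx b)).
have mAb : forall b, measurable (Ab b) by move=> b; exact: sGm.
have cov : Ab true `|` Ab false = setT.
  apply/seteqP; split => // w _.
  by case: (@cover_lemma R K d mup mum tau (fun k => xi k w) f Hn Ho Ht) => H; [left|right].
set E := [set w | _].
pose Y0 := y @^-1` [set false].
have Y0C : Y0 = ~` (y @^-1` [set true]).
  apply/seteqP; split => w; rewrite /Y0 /=; case: (y w) => // H; exfalso; exact: H.
have mY0 : measurable Y0 by rewrite Y0C; exact: measurableC.
have PY0 : P Y0 = (2^-1)%:E.
  rewrite Y0C probability_setC // PY -EFinB; congr (_%:E); by field.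
have EE : E = (y @^-1` [set true] `&` Ab true) `|` (Y0 `&` Ab false).
  apply/seteqP; split => w.
    rewrite /E /= /Ab /Y0 /= /Xs.
    have -> : sample_X mup mum y xi w = sample_X mup mum (fun _ => y w) xi w.
      by apply/matrixP => i j; rewrite !mxE.
    by case: (y w) => H; [left|right].
  rewrite /E /= /Ab /Y0 /= /Xs.
  have -> : sample_X mup mum y xi w = sample_X mup mum (fun _ => y w) xi w.
    by apply/matrixP => i j; rewrite !mxE.
  by case => -[-> H].
have mE : measurable E.
  by rewrite EE; apply: measurableU; apply: measurableI.
have eqI := integral_indic P measurableT mE.
apply: (@le_trans _ _ (P (E `&` setT))); last by rewrite -eqI; exact: lexx.
rewrite setIT EE measureU //; last first.
  apply/seteqP; split => w // [[Hy _] [Hy0 _]]; move: Hy Hy0; rewrite /Y0 /= => -> //.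
  by apply: measurableI.
  by apply: measurableI.
have [a Ha] := @PE _ _ _ P _ (mAb true); have [c Hc] := @PE _ _ _ P _ (mAb false).
have e1 : P (y @^-1` [set true] `&` Ab true) = (2^-1 * a)%:E.
  by rewrite (indY _ mY _ (sAb true)) PY Ha.
have e2 : P (Y0 `&` Ab false) = (2^-1 * c)%:E.
  by rewrite (indY _ mY0 _ (sAb false)) PY0 Hc.
have U : 1 <= a + c.
  have U := measureU2 P (mAb true) (mAb false).
  rewrite cov in U.
  have U2 : (1 <= a%:E + c%:E)%E by rewrite -Ha -Hc -(probability_setT P); exact: U.
  by rewrite -EFinD lee_fin in U2.
apply: (@le_trans _ _ ((2^-1 * a + 2^-1 * c)%:E)).
  rewrite lee_fin; lra.
rewrite le_eqVlt; apply/orP; left; apply/eqP.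
rewrite EFinD -e1 -e2; reflexivity.
Qed.
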